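(* Let $N$ be an $\mathbb{N}^n$-graded submodule of $S^k=Se_1\oplus\cdots\oplus Se_k$ (with $\deg e_i=0$) that is generated in squarefree degrees. Then the initial module $\mathrm{in}(N)$ with respect to the monomial order $\mathbf x^a e_i<\mathbf x^b e_j$ iff ($j<i$) or ($j=i$ and $\mathbf x^a<_{\mathrm{lex}}\mathbf x^b$) is an $\mathbb{N}^n$-graded submodule of $S^k$ of the form $I_1\oplus\cdots\oplus I_k$ (i.e. $I_1e_1\oplus\cdots\oplus I_ke_k$), where each $I_j$ is a monomial ideal of $S$ generated in squarefree degrees.
   Context: $S=\mathbb{k}[x_1,\dots,x_n]$ with fine $\mathbb{N}^n$-grading; $<_{\mathrm{lex}}$ is the usual lexicographic order on monomials of $S$. The initial module $\mathrm{in}(N)$ is the submodule generated by the leading terms (with respect to the given monomial order on $S^k$) of the elements of $N$. A degree is squarefree if all its entries are in $\{0,1\}$. *)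

(* Defs.v *)
From HB Require Import structures.
From mathcomp Require Import all_boot all_order all_algebra.
From mathcomp Require Import mpoly.
Set Implicit Arguments. Unset Strict Implicit. Unset Printing Implicit Defensive.
Import GRing.Theory.
Local Open Scope ring_scope.

Section Defs.
Variables (F : fieldType) (n k : nat).

(* Elements of the free module S^k = S e_1 (+) ... (+) S e_k
   (e_{i+1} is indexed by i : 'I_k). *)
Definition vec := {ffun 'I_k -> {mpoly F[n]}}.

Definition smul (f : {mpoly F[n]}) (v : vec) : vec := [ffun i => f * v i].

Definition span (G : vec -> Prop) (w : vec) : Prop :=
  exists s : seq ({mpoly F[n]} * vec),
    (forall p, p \in s -> G p.2) /\ w = \sum_(p <- s) smul p.1 p.2.

Definition is_submodule (N : vec -> Prop) : Prop :=
  [/\ N 0, (forall v w, N v -> N w -> N (v + w)) &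
      (forall f v, N v -> N (smul f v))].

Definition homogeneous (a : 'X_{1..n}) (v : vec) : Prop :=
  forall i, exists c : F, v i = c *: 'X_[a].

Definition homog_comp (a : 'X_{1..n}) (v : vec) : vec :=
  [ffun i => (v i)@_a *: 'X_[a]].

(* N is an N^n-graded submodule: closed under taking homogeneous components. *)
Definition fine_graded (N : vec -> Prop) : Prop :=
  forall v a, N v -> N (homog_comp a v).

Definition squarefree (a : 'X_{1..n}) : Prop := forall i : 'I_n, (a i <= 1)%N.

Definition generated_in_sqfree_degrees (N : vec -> Prop) : Prop :=
  forall w, N w <-> span (fun v => N v /\ exists a, squarefree a /\ homogeneous a v) w.

(* Lexicographic order on monomials: x^a <_lex x^b (x_1 > x_2 > ... > x_n). *)
Definition lexlt (a b : 'X_{1..n}) : Prop :=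
  exists i : 'I_n, (forall j : 'I_n, (j < i)%N -> a j = b j) /\ (a i < b i)%N.

Definition termlt (t u : 'I_k * 'X_{1..n}) : Prop :=
  (u.1 < t.1)%N \/ (u.1 = t.1 /\ lexlt t.2 u.2).

Definition is_lead_pos (v : vec) (t : 'I_k * 'X_{1..n}) : Prop :=
  (v t.1)@_t.2 != 0 /\
  forall u : 'I_k * 'X_{1..n}, (v u.1)@_u.2 != 0 -> u <> t -> termlt u t.

Definition term_vec (i : 'I_k) (c : F) (a : 'X_{1..n}) : vec :=
  [ffun j => if j == i then c *: 'X_[a] else 0].

Definition is_lead_term (v : vec) (t : vec) : Prop :=
  exists ia, is_lead_pos v ia /\ t = term_vec ia.1 ((v ia.1)@_ia.2) ia.2.

Definition initial_module (N : vec -> Prop) (w : vec) : Prop :=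
  span (fun t => exists v, N v /\ v != 0 /\ is_lead_term v t) w.

Definition monomial_ideal (M : 'X_{1..n} -> Prop) (f : {mpoly F[n]}) : Prop :=
  exists s : seq ({mpoly F[n]} * 'X_{1..n}),
    (forall p, p \in s -> M p.2) /\ f = \sum_(p <- s) p.1 * 'X_[p.2].

End Defs.

(* Main.v *)
Require Import Defs.
From HB Require Import structures.
From mathcomp Require Import all_boot all_order all_algebra.
From mathcomp Require Import mpoly.
Local Open Scope ring_scope.
Import GRing.Theory.

Section Helpers.
Variables (F : fieldType) (n k : nat).
Local Notation S := {mpoly F[n]}.
Local Notation V := (vec F n k).

Lemma mcoeffMX_gen (p : S) m a :
  (p * 'X_[m])@_a = if (m <= a)%MM then p@_(a - m)%MM else 0.
Proof.
case: ifP => hm.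
  by rewrite -{1}(submK hm) addmC mcoeffMX.
apply/eqP; rewrite mcoeff_eq0; apply/negP.
rewrite (perm_mem (msuppMX p m)) => /mapP [m' _ ea].
by rewrite ea lem_addr in hm.
Qed.

Lemma smul_sum (f : S) (s : seq (S * V)) :
  smul f (\sum_(p <- s) smul p.1 p.2) =
  \sum_(p <- [seq (f * q.1, q.2) | q <- s]) smul p.1 p.2.
Proof.
apply/ffunP => i; rewrite !ffunE !sum_ffunE big_map mulr_sumr.
by apply: eq_bigr => p _; rewrite !ffunE mulrA.
Qed.

Lemma span_add (G : V -> Prop) v w : Defs.span G v -> Defs.span G w -> Defs.span G (v + w).
Proof.
move=> [s [hs ->]] [t [ht ->]]; exists (s ++ t); split; last by rewrite big_cat.
by move=> p; rewrite mem_cat => /orP [/hs|/ht].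
Qed.

Lemma span_smul (G : V -> Prop) f v : Defs.span G v -> Defs.span G (smul f v).
Proof.
move=> [s [hs ->]]; exists [seq (f * q.1, q.2) | q <- s]; split; last exact: smul_sum.
by move=> p /mapP [q /hs hq ->].
Qed.

Lemma span_gen (G : V -> Prop) v : G v -> Defs.span G v.
Proof.
move=> hv; exists [:: (1, v)]; split; first by move=> p; rewrite inE => /eqP ->.
by rewrite big_seq1; apply/ffunP => i; rewrite ffunE mul1r.
Qed.

Lemma span0 (G : V -> Prop) : Defs.span G 0.
Proof. by exists [::]; split => //; rewrite big_nil. Qed.

Lemma span_sum (G : V -> Prop) (I : eqType) (r : seq I) (Fv : I -> V) :
  (forall x, x \in r -> Defs.span G (Fv x)) -> Defs.span G (\sum_(x <- r) Fv x).
Proof.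
elim: r => [|x r IH] h; first by rewrite big_nil; apply: span0.
rewrite big_cons; apply: span_add; first by apply: h; rewrite inE eqxx.
by apply: IH => y hy; apply: h; rewrite inE hy orbT.
Qed.

Lemma sub_sum (N : V -> Prop) (s : seq (S * V)) : is_submodule N ->
  (forall p, p \in s -> N p.2) -> N (\sum_(p <- s) smul p.1 p.2).
Proof.
move=> [h0 hD hZ]; elim: s => [|q s IH] h; first by rewrite big_nil.
rewrite big_cons; apply: hD; first by apply: hZ; apply: h; rewrite inE eqxx.
by apply: IH => p hp; apply: h; rewrite inE hp orbT.
Qed.

Lemma mi0 (M : 'X_{1..n} -> Prop) : monomial_ideal M (0 : S).
Proof. by exists [::]; split => //; rewrite big_nil. Qed.

Lemma miD (M : 'X_{1..n} -> Prop) (f g : S) :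
  monomial_ideal M f -> monomial_ideal M g -> monomial_ideal M (f + g).
Proof.
move=> [s [hs ->]] [t [ht ->]]; exists (s ++ t); split; last by rewrite big_cat.
by move=> p; rewrite mem_cat => /orP [/hs|/ht].
Qed.

Lemma miM (M : 'X_{1..n} -> Prop) (h f : S) :
  monomial_ideal M f -> monomial_ideal M (h * f).
Proof.
move=> [s [hs ->]]; exists [seq (h * q.1, q.2) | q <- s]; split.
  by move=> p /mapP [q /hs hq ->].
by rewrite big_map mulr_sumr; apply: eq_bigr => p _; rewrite mulrA.
Qed.

Lemma miX (M : 'X_{1..n} -> Prop) a : M a -> monomial_ideal M ('X_[a] : S).
Proof.
move=> ha; exists [:: (1, a)]; split; first by move=> p; rewrite inE => /eqP ->.
by rewrite big_seq1 mul1r.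
Qed.

End Helpers.

Section Main.
Variables (F : fieldType) (n k : nat) (N : vec F n k -> Prop).
Local Notation S := {mpoly F[n]}.
Local Notation V := (vec F n k).

Definition Mdef (j : 'I_k) (b : 'X_{1..n}) : Prop :=
  squarefree b /\ exists w : V, N w /\ (forall l : 'I_k, (l < j)%N -> (w l)@_b = 0)
     /\ (w j)@_b != 0.

Lemma lemA j b : fine_graded N -> Mdef j b -> initial_module N (term_vec j 1 b).
Proof.
move=> hfg [_ [w [hw [hlt hj]]]].
set u := homog_comp b w.
have hu : N u by apply: hfg.
have huc : forall l a, (u l)@_a = (w l)@_b * (b == a)%:R.
  by move=> l a; rewrite /u ffunE mcoeffZ mcoeffX.
have hlead : is_lead_pos u (j, b).
  split => /=; first by rewrite huc eqxx mulr1.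
  move=> [l a] /=; rewrite huc; have [<-|nba] := eqVneq b a; last by rewrite mulr0 eqxx.
  rewrite mulr1 => hl hne; left => /=.
  case: (ltngtP l j) => [ljl|//|ejl].
    by move: hl; rewrite (hlt _ ljl) eqxx.
  by exfalso; apply: hne; congr pair; apply: val_inj.
have hun : u != 0.
  apply/negP => /eqP u0; move: hlead => [/= h _]; move: h.
  by rewrite u0 ffunE mcoeff0 eqxx.
set c := (u j)@_b.
have hc : c != 0 by case: hlead.
have hin : initial_module N (term_vec j c b).
  apply: span_gen; exists u; split => //; split => //.
  by exists (j, b); split.
have -> : term_vec j 1 b = smul (c^-1)%:MP (term_vec j c b).
  apply/ffunP => l; rewrite !ffunE; case: (l == j); last by rewrite mulr0.
  by rewrite mul_mpolyC scalerA mulVf.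
exact: span_smul.
Qed.

Lemma lemB i a v : is_submodule N -> generated_in_sqfree_degrees N ->
  N v -> is_lead_pos v (i, a) -> exists b, (b <= a)%MM /\ Mdef i b.
Proof.
move=> hsub hgen hv [/= hva hmax].
set b : 'X_{1..n} := [multinom minn (a t) 1 | t < n].
have hbs : squarefree b by move=> t; rewrite mnmE geq_minr.
have hba : (b <= a)%MM by apply/mnm_lepP => t; rewrite mnmE geq_minl.
have key : forall s : seq (S * V),
   (forall p, p \in s -> N p.2 /\ exists c, squarefree c /\ homogeneous c p.2) ->
   exists w, N w /\ forall l, (w l)@_b = ((\sum_(p <- s) smul p.1 p.2) l)@_a.
  have [h0 hD hZ] := hsub.
  elim => [|[f g] s IH] hs.
    by exists 0; split => // l; rewrite big_nil !ffunE !mcoeff0.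
  have [w' [hw' ew']] : exists w, N w /\ forall l, (w l)@_b = ((\sum_(p <- s) smul p.1 p.2) l)@_a.
    by apply: IH => p hp; apply: hs; rewrite inE hp orbT.
  have [/= hg [c [hcs hch]]] := hs (f, g) (mem_head _ _).
  set h : S := if (c <= a)%MM then f@_(a - c)%MM *: 'X_[b - c] else 0.
  exists (smul h g + w'); split; first by apply: hD => //; apply: hZ.
  move=> l; rewrite big_cons !ffunE !mcoeffD ew'; congr (_ + _) => /=.
  have [d ->] := hch l.
  rewrite -!scalerAr !mcoeffZ [(f * _)@__]mcoeffMX_gen; congr (_ * _).
  rewrite /h; case hca: (c <= a)%MM; last by rewrite mul0r mcoeff0.
  have hcb : (c <= b)%MM.
    apply/mnm_lepP => t; rewrite mnmE leq_min (hcs t) andbT.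
    exact: (mnm_lepP hca t).
  by rewrite mcoeffMX_gen hcb mcoeffZ mcoeffX eqxx mulr1.
have [s [hs ev]] := (proj1 (hgen v)) hv.
have [w [hw ew]] := key s hs.
exists b; split => //; split => //; exists w; split => //; split.
  move=> l hl; rewrite ew -ev; apply/eqP; apply/negP => /negP hla.
  have hne : (l, a) <> (i, a).
    by case=> eli; rewrite eli ltnn in hl.
  case: (hmax (l, a) hla hne) => /= [hil|[eil [t [_]]]].
    by move: (ltn_trans hl hil); rewrite ltnn.
  by rewrite ltnn.
by rewrite ew -ev.
Qed.
End Main.

Theorem proposition4p10 (F : fieldType) (n k : nat) (N : vec F n k -> Prop) :
  is_submodule N -> fine_graded N -> generated_in_sqfree_degrees N ->
  exists M : 'I_k -> ('X_{1..n} -> Prop),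
    (forall j a, M j a -> squarefree a) /\
    (forall w : vec F n k,
       initial_module N w <-> forall j : 'I_k, monomial_ideal (M j) (w j)).
Proof.
move=> hsub hfg hgen; exists (@Mdef F n k N); split; first by move=> j a [].
move=> w; split.
  move=> [s [hs ->]] j; rewrite sum_ffunE big_seq.
  apply: big_ind; [exact: mi0 | exact: miD |].
  move=> [f t] /hs [v [hv [_ [[i a] [hl /= ->]]]]] /=.
  have [b [hba hM]] := @lemB F n k N _ _ _ hsub hgen hv hl.
  rewrite !ffunE; case: eqP => [->|_]; last by rewrite mulr0; exact: mi0.
  rewrite -(submK hba) mpolyXD scalerAl mulrA.
  by apply: miM; apply: miX.
move=> hw.
have -> : w = \sum_(j : 'I_k) [ffun l => if l == j then w j else 0].
  apply/ffunP => l; rewrite sum_ffunE (bigD1 l) //= ffunE eqxx big1 ?addr0 //.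
  by move=> j hj; rewrite ffunE eq_sym (negbTE hj).
apply: span_sum => j _.
have [s [hs ews]] := hw j.
have -> : [ffun l => if l == j then w j else 0] =
          \sum_(p <- s) smul p.1 (term_vec j 1 p.2).
  apply/ffunP => l; rewrite ffunE sum_ffunE.
  case: (boolP (l == j)) => [/eqP ->| hne].
    by rewrite ews; apply: eq_bigr => p _; rewrite !ffunE eqxx scale1r.
  by rewrite big1 // => p _; rewrite !ffunE (negbTE hne) mulr0.
apply: span_sum => p hp; apply: span_smul; apply: lemA => //.
exact: hs.
Qed.
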